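(* In the oracle setting below with $K=2$ populations (sizes $n_1,n_2$, $n=n_1+n_2$), run Algorithm BS* on $\mathcal D$. (a) In the first iteration, transferring an observation from population 1 to $C_1$ maximizes $d_w^*(C_1^{(1)},C_2^{(1)})$ if and only if $n_1\le n_2$. Furthermore, if $n_1\le n_2$ and an observation of population 1 is transferred in the first iteration, then in each of the first $n_1$ iterations an observation of population 1 is transferred to $C_1$, and $r\mapsto d_w^*(C_1^{(r)},C_2^{(r)})$ is increasing for $r=1,\dots,n_1$. (b) Under the conditions of (a), $r\mapsto d_w^*(C_1^{(r)},C_2^{(r)})$ is decreasing for $r\ge n_1$.
   Context: Let $k$ be a characteristic kernel on a separable metric space $\mathcal X$ and, for Borel probability measures $P,Q$, $d(P,Q)=\iint k\,dP\,dP+\iint k\,dQ\,dQ-2\iint k\,dP\,dQ$ (squared MMD). Oracle setting: $\mathcal D=\mathcal D_1\cup\dots\cup\mathcal D_K$ (disjoint), $\mathcal D_i$ the $n_i$ observations from population $i$, $\widehat P_i$ the empirical distribution of $\mathcal D_i$, the $\widehat P_i$ being pairwise distinct. For nonempty $S\subseteq\mathcal D$ with $m_i=|S\cap\mathcal D_i|$, $\widetilde P_S=\sum_i\frac{m_i}{|S|}\widehat P_i$; for disjoint nonempty $S_1,S_2$, $d_w^*(S_1,S_2)=\frac{|S_1||S_2|}{|S_1|+|S_2|}d(\widetilde P_{S_1},\widetilde P_{S_2})$. Algorithm BS* on $\mathcal E$: $C_1^{(0)}=\emptyset$, $C_2^{(0)}=\mathcal E$; for $r=1,\dots,|\mathcal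 E|-1$ choose $c\in C_2^{(r-1)}$ maximizing $d_w^*(C_1^{(r-1)}\cup\{c\},C_2^{(r-1)}\setminus\{c\})$ and set $C_1^{(r)}=C_1^{(r-1)}\cup\{c\}$, $C_2^{(r)}=C_2^{(r-1)}\setminus\{c\}$. ''An observation from population $i$ is transferred at iteration $r$'' means the chosen $c$ lies in $\mathcal D_i$. *)

(* Defs.v *)
From HB Require Import structures.
From mathcomp Require Import all_boot all_order all_algebra.
From mathcomp Require Import reals.
Set Implicit Arguments. Unset Strict Implicit. Unset Printing Implicit Defensive.
Import Order.TTheory GRing.Theory Num.Theory.
Local Open Scope ring_scope.

Section Defs.
Variables (R : realType) (X : eqType).

(* A finitely supported (signed) measure on X: sum_p p.2 * delta_{p.1}. *)
Definition fsmeas := seq (X * R).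

Definition mass (P : fsmeas) (x : X) : R := \sum_(p <- P | p.1 == x) p.2.

Definition is_fsprob (P : fsmeas) : Prop :=
  (forall p, p \in P -> 0 <= p.2) /\ \sum_(p <- P) p.2 = 1.

Definition kint (k : X -> X -> R) (P Q : fsmeas) : R :=
  \sum_(p <- P) \sum_(q <- Q) p.2 * q.2 * k p.1 q.1.

Definition mmd2 (k : X -> X -> R) (P Q : fsmeas) : R :=
  kint k P P + kint k Q Q - 2 * kint k P Q.

(* characteristic kernel, restricted to finitely supported measures:
   symmetric, positive definite, and the mean embedding is injective. *)
Definition characteristic (k : X -> X -> R) : Prop :=
  [/\ forall a b, k a b = k b a,
      forall s : fsmeas, 0 <= kint k s s &
      forall P Q, is_fsprob P -> is_fsprob Q -> mmd2 k P Q = 0 ->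
        forall y, mass P y = mass Q y].

Definition scale (a : R) (P : fsmeas) : fsmeas := [seq (p.1, a * p.2) | p <- P].

(* Oracle setting with K = 2 populations: observations are indexed by
   'I_(n1+n2); indices < n1 form population 1 (D_1), the others D_2. *)
Variables (k : X -> X -> R) (n1 n2 : nat) (x : 'I_(n1 + n2) -> X).

Definition D1 : {set 'I_(n1 + n2)} := [set j : 'I_(n1 + n2) | (j < n1)%N].
Definition D2 : {set 'I_(n1 + n2)} := [set j : 'I_(n1 + n2) | (n1 <= j)%N].

Definition emp1 : fsmeas := [seq (x j, 1 / n1%:R) | j <- enum D1].
Definition emp2 : fsmeas := [seq (x j, 1 / n2%:R) | j <- enum D2].

Definition ptilde (S : {set 'I_(n1 + n2)}) : fsmeas :=
  scale (#|S :&: D1|%:R / #|S|%:R) emp1 ++ scale (#|S :&: D2|%:R / #|S|%:R) emp2.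

Definition dw (S1 S2 : {set 'I_(n1 + n2)}) : R :=
  (#|S1|%:R * #|S2|%:R / (#|S1|%:R + #|S2|%:R)) * mmd2 k (ptilde S1) (ptilde S2).

(* objective when moving c from C_2 = complement of A into C_1 = A *)
Definition bs_obj (A : {set 'I_(n1 + n2)}) (c : 'I_(n1 + n2)) : R :=
  dw (c |: A) ((~: A) :\ c).

(* C is a run of Algorithm BS* on E = D (C r = C_1^(r), C_2^(r) = ~: C r),
   for iterations r = 1, ..., |D| - 1, with arbitrary tie-breaking. *)
Definition BSrun (C : nat -> {set 'I_(n1 + n2)}) : Prop :=
  C 0%N = set0 /\
  forall r : nat, (0 < r < n1 + n2)%N ->
    exists2 c, c \notin C r.-1 &
      C r = c |: C r.-1 /\
      forall c', c' \notin C r.-1 -> bs_obj (C r.-1) c' <= bs_obj (C r.-1) c.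

End Defs.

(* Main.v *)
Require Import Defs.
From HB Require Import structures.
From mathcomp Require Import all_boot all_order all_algebra.
From mathcomp Require Import reals ring lra.
Import Order.TTheory GRing.Theory Num.Theory.
Local Open Scope ring_scope.

Lemma kint_catl (R : realType) (X : eqType) (k : X -> X -> R) (P Q T : fsmeas R X) :
  kint k (P ++ Q) T = kint k P T + kint k Q T.
Proof. by rewrite /kint big_cat. Qed.

Lemma kint_catr (R : realType) (X : eqType) (k : X -> X -> R) (P Q T : fsmeas R X) :
  kint k P (Q ++ T) = kint k P Q + kint k P T.
Proof. by rewrite /kint -big_split; apply: eq_bigr => p _; rewrite big_cat. Qed.

Lemma kint_scalel (R : realType) (X : eqType) (k : X -> X -> R) a (P Q : fsmeas R X) :
  kint k (scale a P) Q = a * kint k P Q.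
Proof.
rewrite /kint /scale big_map mulr_sumr; apply: eq_bigr => p _.
rewrite mulr_sumr; apply: eq_bigr => q _ /=; ring.
Qed.

Lemma kint_scaler (R : realType) (X : eqType) (k : X -> X -> R) a (P Q : fsmeas R X) :
  kint k P (scale a Q) = a * kint k P Q.
Proof.
rewrite /kint /scale mulr_sumr; apply: eq_bigr => p _.
rewrite big_map mulr_sumr; apply: eq_bigr => q _ /=; ring.
Qed.

Lemma kint_sym (R : realType) (X : eqType) (k : X -> X -> R) (P Q : fsmeas R X) :
  (forall a b, k a b = k b a) -> kint k P Q = kint k Q P.
Proof.
move=> ks; rewrite /kint exchange_big; apply: eq_bigr => q _; apply: eq_bigr => p _.
by rewrite ks; ring.
Qed.

Lemma mmd2_mix (R : realType) (X : eqType) (k : X -> X -> R) (e1 e2 : fsmeas R X) u1 u2 v1 v2 :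
  (forall a b, k a b = k b a) -> u1 + u2 = 1 -> v1 + v2 = 1 ->
  mmd2 k (scale u1 e1 ++ scale u2 e2) (scale v1 e1 ++ scale v2 e2) =
  (u1 - v1) ^+ 2 * mmd2 k e1 e2.
Proof.
move=> ks hu hv; rewrite /mmd2 !(kint_catl, kint_catr, kint_scalel, kint_scaler).
rewrite (@kint_sym _ _ _ e2 e1) //.
have -> : u2 = 1 - u1 by rewrite -hu; ring.
have -> : v2 = 1 - v1 by rewrite -hv; ring.
ring.
Qed.

Lemma mmd2_nonneg (R : realType) (X : eqType) (k : X -> X -> R) (e1 e2 : fsmeas R X) :
  characteristic k -> 0 <= mmd2 k e1 e2.
Proof.
case=> ks kp _; have := kp (e1 ++ scale (-1) e2).
rewrite !(kint_catl, kint_catr, kint_scalel, kint_scaler) (@kint_sym _ _ _ e2 e1) // /mmd2.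
move=> h; lra.
Qed.

Lemma D2E n1 n2 : D2 n1 n2 = ~: D1 n1 n2.
Proof. by apply/setP => j; rewrite !inE leqNgt. Qed.

Lemma card_D1 n1 n2 : #|D1 n1 n2| = n1.
Proof.
have -> : D1 n1 n2 = [set lshift n2 i | i : 'I_n1].
  apply/setP => j; rewrite !inE; apply/idP/imsetP.
  - by move=> hj; exists (Ordinal hj) => //; apply: val_inj.
  - by case=> i _ ->; rewrite /= ltn_ord.
by rewrite card_imset ?card_ord //; apply: lshift_inj.
Qed.

Lemma card_D2 n1 n2 : #|D2 n1 n2| = n2.
Proof.
by rewrite D2E cardsCs setCK card_D1 card_ord addKn.
Qed.

Lemma fsprob_emp1 (R : realType) (X : eqType) n1 n2 (x : 'I_(n1 + n2) -> X) :
  (0 < n1)%N -> is_fsprob (emp1 R x).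
Proof.
move=> h; split.
  by move=> p /mapP [j _ ->] /=; rewrite divr_ge0 ?ler0n.
rewrite /emp1 big_map big_enum /= sumr_const card_D1.
by rewrite mul1r -[LHS]mulr_natr mulVf // pnatr_eq0 -lt0n.
Qed.

Lemma fsprob_emp2 (R : realType) (X : eqType) n1 n2 (x : 'I_(n1 + n2) -> X) :
  (0 < n2)%N -> is_fsprob (emp2 R x).
Proof.
move=> h; split.
  by move=> p /mapP [j _ ->] /=; rewrite divr_ge0 ?ler0n.
rewrite /emp2 big_map big_enum /= sumr_const card_D2.
by rewrite mul1r -[LHS]mulr_natr mulVf // pnatr_eq0 -lt0n.
Qed.

Lemma D_pos (R : realType) (X : eqType) (k : X -> X -> R) n1 n2 (x : 'I_(n1 + n2) -> X) :
  characteristic k -> (0 < n1)%N -> (0 < n2)%N ->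
  (exists y, mass (emp1 R x) y != mass (emp2 R x) y) ->
  0 < mmd2 k (emp1 R x) (emp2 R x).
Proof.
move=> kc h1 h2 [y hy]; rewrite lt_def mmd2_nonneg // andbT.
apply/eqP => h0; case: kc => _ _ kc.
by move: hy; rewrite (kc _ _ (@fsprob_emp1 R X n1 n2 x h1) (@fsprob_emp2 R X n1 n2 x h2) h0 y) eqxx.
Qed.

Lemma card_compl n1 n2 (S : {set 'I_(n1 + n2)}) : #|~: S| = (n1 + n2 - #|S|)%N.
Proof. by rewrite cardsCs setCK card_ord. Qed.

Lemma card_compl_D1 n1 n2 (S : {set 'I_(n1 + n2)}) :
  #|~: S :&: D1 n1 n2| = (n1 - #|S :&: D1 n1 n2|)%N.
Proof.
have e := cardsID S (D1 n1 n2); rewrite card_D1 in e.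
by rewrite -[X in (X - _)%N]e setDE [D1 n1 n2 :&: S]setIC addKn setIC.
Qed.

Lemma dw_formula (R : realType) (X : eqType) (k : X -> X -> R) n1 n2 (x : 'I_(n1 + n2) -> X)
  (S : {set 'I_(n1 + n2)}) :
  (forall a b, k a b = k b a) -> (0 < #|S| < n1 + n2)%N ->
  dw k x S (~: S) = mmd2 k (emp1 R x) (emp2 R x) *
    ((#|S :&: D1 n1 n2|%:R * (n1 + n2)%:R - n1%:R * #|S|%:R) ^+ 2 /
      ((n1 + n2)%:R * #|S|%:R * ((n1 + n2)%:R - #|S|%:R))).
Proof.
move=> ks /andP [hs hsn].
have ha : (#|S :&: D1 n1 n2| <= #|S|)%N by rewrite subset_leq_card // subsetIl.
have haD : (#|S :&: D1 n1 n2| <= n1)%N.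
  by have := subset_leq_card (subsetIr S (D1 n1 n2)); rewrite card_D1.
have hsum : forall T : {set 'I_(n1 + n2)}, (0 < #|T|)%N ->
   #|T :&: D1 n1 n2|%:R / #|T|%:R + #|T :&: D2 n1 n2|%:R / #|T|%:R = 1 :> R.
  move=> T hT; rewrite -mulrDl -natrD D2E -setDE cardsID mulfV //.
  by rewrite pnatr_eq0 -lt0n.
rewrite /dw /ptilde mmd2_mix //; last first.
- by apply: hsum; rewrite card_compl subn_gt0.
- exact: hsum.
rewrite card_compl card_compl_D1 !natrB // ?(ltnW hsn) //.
set s := (#|S|)%:R; set a := #|S :&: D1 n1 n2|%:R.
have s0 : s != 0 by rewrite pnatr_eq0 -lt0n.
have ns0 : (n1 + n2)%:R - s != 0 :> R.
  by rewrite subr_eq0 eq_sym /s eqr_nat neq_ltn hsn.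
have n0 : (n1 + n2)%:R != 0 :> R by rewrite pnatr_eq0 -lt0n (leq_ltn_trans _ hsn).
rewrite natrD in ns0 n0 *.
have -> : s + (n1%:R + n2%:R - s) = n1%:R + n2%:R by ring.
field.
by rewrite ns0 s0 n0.
Qed.

Lemma bs_objE (R : realType) (X : eqType) (k : X -> X -> R) n1 n2 (x : 'I_(n1 + n2) -> X) A c :
  bs_obj k x A c = dw k x (c |: A) (~: (c |: A)).
Proof. by rewrite /bs_obj setCU setDE setIC. Qed.

Lemma key_step (R : realType) (D a1 a2 r : R) : 0 < D -> 0 < a2 -> 0 <= a1 -> a1 <= a2 ->
  1 <= r -> r + 1 < a1 + a2 ->
  D * ((r * (a1 + a2) - a1 * (r + 1)) ^+ 2 / ((a1 + a2) * (r + 1) * (a1 + a2 - (r + 1)))) <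
  D * (((r + 1) * (a1 + a2) - a1 * (r + 1)) ^+ 2 / ((a1 + a2) * (r + 1) * (a1 + a2 - (r + 1)))).
Proof.
move=> hD h2 h1 h12 hr hrn.
rewrite ltr_pM2l // ltr_pM2r; last by rewrite invr_gt0 !mulr_gt0 //; lra.
rewrite -subr_gt0.
have -> : ((r + 1) * (a1 + a2) - a1 * (r + 1)) ^+ 2 - (r * (a1 + a2) - a1 * (r + 1)) ^+ 2
  = (a1 + a2) * (2 * (r + 1) * a2 - (a1 + a2)) by ring.
apply: mulr_gt0; first lra.
have : 0 <= (r - 1) * a2 by apply: mulr_ge0; lra.
lra.
Qed.

Lemma inc_step (R : realType) (D a1 a2 r : R) : 0 < D -> 0 < a2 -> 0 <= a1 ->
  1 <= r -> r + 1 < a1 + a2 ->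
  D * ((r * (a1 + a2) - a1 * r) ^+ 2 / ((a1 + a2) * r * (a1 + a2 - r))) <
  D * (((r + 1) * (a1 + a2) - a1 * (r + 1)) ^+ 2 / ((a1 + a2) * (r + 1) * (a1 + a2 - (r + 1)))).
Proof.
move=> hD h2 h1 hr hrn.
have n0 : a1 + a2 != 0 by rewrite gt_eqF //; lra.
have r0 : r != 0 by rewrite gt_eqF //; lra.
have r10 : r + 1 != 0 by rewrite gt_eqF //; lra.
have nr0 : a1 + a2 - r != 0 by rewrite gt_eqF //; lra.
have nr10 : a1 + a2 - (r + 1) != 0 by rewrite gt_eqF //; lra.
have -> : (r * (a1 + a2) - a1 * r) ^+ 2 / ((a1 + a2) * r * (a1 + a2 - r))
   = (a2 ^+ 2 / (a1 + a2)) * (r / (a1 + a2 - r)) by field; rewrite n0 r0 nr0.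
have -> : ((r + 1) * (a1 + a2) - a1 * (r + 1)) ^+ 2 / ((a1 + a2) * (r + 1) * (a1 + a2 - (r + 1)))
   = (a2 ^+ 2 / (a1 + a2)) * ((r + 1) / (a1 + a2 - (r + 1))) by field; rewrite n0 r10 nr10.
rewrite ltr_pM2l // ltr_pM2l; last by rewrite divr_gt0 ?exprn_gt0 //; lra.
rewrite ltr_pdivrMr; last lra.
rewrite mulrAC ltr_pdivlMr; last lra.
nra.
Qed.

Lemma dec_step (R : realType) (D a1 a2 r : R) : 0 < D -> 0 < a1 ->
  1 <= r -> r + 1 < a1 + a2 ->
  D * (((a1 * (a1 + a2) - a1 * (r + 1)) ^+ 2 / ((a1 + a2) * (r + 1) * (a1 + a2 - (r + 1))))) <
  D * ((a1 * (a1 + a2) - a1 * r) ^+ 2 / ((a1 + a2) * r * (a1 + a2 - r))).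
Proof.
move=> hD h1 hr hrn.
have n0 : a1 + a2 != 0 by rewrite gt_eqF //; lra.
have r0 : r != 0 by rewrite gt_eqF //; lra.
have r10 : r + 1 != 0 by rewrite gt_eqF //; lra.
have nr0 : a1 + a2 - r != 0 by rewrite gt_eqF //; lra.
have nr10 : a1 + a2 - (r + 1) != 0 by rewrite gt_eqF //; lra.
have -> : (a1 * (a1 + a2) - a1 * r) ^+ 2 / ((a1 + a2) * r * (a1 + a2 - r))
   = (a1 ^+ 2 / (a1 + a2)) * ((a1 + a2 - r) / r) by field; rewrite n0 r0 nr0.
have -> : (a1 * (a1 + a2) - a1 * (r + 1)) ^+ 2 / ((a1 + a2) * (r + 1) * (a1 + a2 - (r + 1)))
   = (a1 ^+ 2 / (a1 + a2)) * ((a1 + a2 - (r + 1)) / (r + 1)) by field; rewrite n0 r10 nr10.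
rewrite ltr_pM2l // ltr_pM2l; last by rewrite divr_gt0 ?exprn_gt0 //; lra.
rewrite ltr_pdivrMr; last lra.
rewrite mulrAC ltr_pdivlMr; last lra.
nra.
Qed.

Lemma first_val (R : realType) (X : eqType) (k : X -> X -> R) n1 n2 (x : 'I_(n1 + n2) -> X) c :
  (forall a b, k a b = k b a) -> (0 < n1)%N -> (0 < n2)%N ->
  bs_obj k x set0 c = mmd2 k (emp1 R x) (emp2 R x) *
    ((if c \in D1 n1 n2 then n2%:R else n1%:R) ^+ 2 /
      ((n1 + n2)%:R * 1 * ((n1 + n2)%:R - 1))).
Proof.
move=> ks h1 h2.
rewrite bs_objE setU0 dw_formula //; last first.
  by rewrite cards1 /=; case: n1 h1 {x c} => // n1' _; case: n2 h2 => // n2' _; rewrite addSn addnS.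
rewrite cards1; congr (_ * (_ / _)).
case: ifP => hc.
  have -> : [set c] :&: D1 n1 n2 = [set c] by apply/setIidPl; rewrite sub1set.
  by rewrite cards1 natrD; congr (_ ^+ 2); ring.
have -> : [set c] :&: D1 n1 n2 = set0.
  by apply/setP => j; rewrite in_set0 in_setI in_set1; apply/negP => /andP [/eqP -> ]; rewrite hc.
by rewrite cards0 mul0r sub0r mulr1 sqrrN.
Qed.

Theorem lemma1 (R : realType) (X : eqType) (k : X -> X -> R) (n1 n2 : nat)
    (x : 'I_(n1 + n2) -> X) :
  characteristic k -> (0 < n1)%N -> (0 < n2)%N ->
  (exists y, mass (emp1 R x) y != mass (emp2 R x) y) ->
  (* (a), first sentence *)
  (forall c : 'I_(n1 + n2), c \in D1 n1 n2 ->
     ((forall c', bs_obj k x set0 c' <= bs_obj k x set0 c) <-> (n1 <= n2)%N)) /\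
  (forall C : nat -> {set 'I_(n1 + n2)}, BSrun k x C ->
     (n1 <= n2)%N -> C 1%N :\: C 0%N \subset D1 n1 n2 ->
     (* (a), second sentence *)
     (forall r, (0 < r <= n1)%N -> C r :\: C r.-1 \subset D1 n1 n2) /\
     (forall r, (0 < r < n1)%N ->
        dw k x (C r) (~: C r) < dw k x (C r.+1) (~: C r.+1)) /\
     (* (b) *)
     (forall r, (n1 <= r)%N -> (r.+1 < n1 + n2)%N ->
        dw k x (C r.+1) (~: C r.+1) < dw k x (C r) (~: C r))).
Proof.
move=> kc h1 h2 hy.
have ks : forall a b, k a b = k b a by case: kc.
have hD := @D_pos R X k n1 n2 x kc h1 h2 hy.
set D := mmd2 k (emp1 R x) (emp2 R x) in hD *.
have hq : 0 < ((n1 + n2)%:R * 1 * ((n1 + n2)%:R - 1) :> R)^-1.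
  rewrite invr_gt0 mulr1 mulr_gt0 // ?ltr0n ?addn_gt0 ?h1 // subr_gt0 natrD.
  have : (1 <= n1%:R :> R) by rewrite ler1n.
  have : (1 <= n2%:R :> R) by rewrite ler1n.
  lra.
split.
  move=> c cD1; rewrite !first_val // cD1; split.
  - have hn : (n1 < n1 + n2)%N by rewrite -{1}[n1]addn0 ltn_add2l.
    move/(_ (Ordinal hn)); rewrite first_val // inE /= ltnn.
    by rewrite ler_pM2l // ler_pM2r // -!natrX ler_nat leq_exp2r.
  - move=> le c'; rewrite first_val //; case: ifP => _ //.
    by rewrite ler_pM2l // ler_pM2r // -!natrX ler_nat leq_exp2r.
move=> C [C0 run] le12 first.
have hn1 : (n1 < n1 + n2)%N by rewrite -{1}[n1]addn0 ltn_add2l.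
have card : forall r, (r < n1 + n2)%N -> #|C r| = r.
  elim=> [|r IH] hr; first by rewrite C0 cards0.
  have [c cn [-> _]] := run r.+1 hr.
  by rewrite /= cardsU1 cn IH // ltnW.
have mono : forall r r', (r <= r')%N -> (r' < n1 + n2)%N -> C r \subset C r'.
  move=> r; elim=> [|r' IH] hle hr'.
    by move: hle; rewrite leqn0 => /eqP ->.
  case: (ltngtP r r'.+1) hle => // [hlt _|-> _]; last exact: subxx.
  apply: subset_trans (IH hlt (ltnW hr')) _.
  have [c _ [-> _]] := run r'.+1 hr'.
  exact: subsetUr.
have sub1 : forall r, (r <= n1)%N -> C r \subset D1 n1 n2.
  elim=> [|r IH] hr; first by rewrite C0 sub0set.
  case: r IH hr => [|r] IH hr.
    by move: first; rewrite C0 setD0.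
  have IH' := IH (ltnW hr).
  have hrn : (0 < r.+2 < n1 + n2)%N by rewrite /= (leq_ltn_trans hr hn1).
  have [c cn [Ceq max]] := run r.+2 hrn.
  rewrite /= in cn Ceq max.
  rewrite Ceq subUset IH' andbT sub1set.
  apply/negPn/negP => cnD.
  have [c' c'in] : exists c', c' \in D1 n1 n2 :\: C r.+1.
    apply/set0Pn; rewrite -card_gt0 cardsD (setIidPr IH') card_D1 card ?subn_gt0 //.
    exact: ltn_trans hr hn1.
  move: c'in; rewrite in_setD => /andP [c'A c'D].
  have := max c' c'A.
  have hA := card r.+1 (ltn_trans (ltnSn _) (proj2 (andP hrn))).
  have hs1 : (0 < #|c' |: C r.+1| < n1 + n2)%N by rewrite cardsU1 c'A hA.
  have hs2 : (0 < #|c |: C r.+1| < n1 + n2)%N by rewrite cardsU1 cn hA.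
  rewrite !bs_objE !dw_formula //.
  have -> : (c' |: C r.+1) :&: D1 n1 n2 = c' |: C r.+1.
    by apply/setIidPl; rewrite subUset sub1set c'D IH'.
  have -> : (c |: C r.+1) :&: D1 n1 n2 = C r.+1.
    rewrite setIUl (setIidPl IH').
    have -> : [set c] :&: D1 n1 n2 = set0; last by rewrite set0U.
    apply/setP => j; rewrite in_set0 in_setI in_set1.
    by apply/negP => /andP [/eqP -> ]; rewrite (negbTE cnD).
  rewrite cardsU1 c'A cardsU1 cn hA add1n.
  have e : (r.+2)%:R = (r.+1)%:R + 1 :> R by rewrite -addn1 natrD.
  rewrite e natrD; apply/negP; rewrite -ltNge.
  apply: key_step => //; rewrite ?ltr0n ?ler0n ?ler_nat ?ler1n //.
  by rewrite -e -natrD ltr_nat (leq_ltn_trans hr hn1).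
split.
  move=> r /andP [r0 rn1].
  exact: subset_trans (subsetDl _ _) (sub1 r rn1).
split.
  move=> r /andP [r0 rn1].
  have hr : (r < n1 + n2)%N by apply: ltn_trans rn1 hn1.
  have hr1 : (r.+1 < n1 + n2)%N by apply: leq_ltn_trans rn1 hn1.
  rewrite !dw_formula // ?card ?r0 ?hr ?hr1 //.
  rewrite (setIidPl (sub1 r (ltnW rn1))) (setIidPl (sub1 r.+1 rn1)) !card //.
  have e : (r.+1)%:R = r%:R + 1 :> R by rewrite -addn1 natrD.
  rewrite e natrD; apply: inc_step => //; rewrite ?ltr0n ?ler0n ?ler1n //.
  by rewrite -e -natrD ltr_nat.
move=> r hr hr1.
have hr0 : (r < n1 + n2)%N by apply: ltn_trans hr1.
have Cn1 : C n1 = D1 n1 n2.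
  by apply/eqP; rewrite eqEcard (sub1 n1 (leqnn _)) (card n1 hn1) card_D1 leqnn.
have hI : forall r', (n1 <= r')%N -> (r' < n1 + n2)%N -> #|C r' :&: D1 n1 n2| = n1.
  move=> r' h h'; rewrite (setIidPr _) ?card_D1 // -Cn1; exact: mono.
rewrite !dw_formula // ?card ?hr0 ?hr1 ?(leq_trans h1 hr) //.
rewrite (hI r.+1 (leqW hr) hr1) (hI r hr hr0).
have e : (r.+1)%:R = r%:R + 1 :> R by rewrite -addn1 natrD.
rewrite e natrD; apply: dec_step => //; rewrite ?ltr0n ?ler1n ?(leq_trans h1 hr) //.
by rewrite -e -natrD ltr_nat.
Qed.
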